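(* Let $\mathbb D$ be an arbitrary commutative ring with identity, and write $\mathbb D$ also for its additive group. (1) For each integer $n\ge1$, $$TS\mathcal R_n(\mathbb D)^{ab}\cong TS\mathcal A_1(\mathbb D)\times T\mathcal J_n(\mathbb D)^{ab}\cong \mathbb D\times T\mathcal J_n(\mathbb D)^{ab}.$$ (2) Considering $S\mathcal R(\mathbb D)$ and $\mathcal J(\mathbb D)$ as abstract groups, $$S\mathcal R(\mathbb D)^{ab}\cong\mathbb D\times\mathcal J(\mathbb D)^{ab}.$$
   Context: The Riordan group over $\mathbb D$ consists of pairs $(g,f)$ of formal power series $g=\sum_{k\ge0}g_kt^k$, $f=\sum_{k\ge1}f_kt^k$ in $\mathbb D[[t]]$ with $g_0,f_1$ units, identified with the lower triangular matrices $(d_{n,k})_{n,k\ge0}$, $d_{n,k}=[t^n]g f^k$; the product is $(g_1,f_1)(g_2,f_2)=(g_1\cdot(g_2\circ f_1),\,f_2\circ f_1)$, identity $(1,t)$. $S\mathcal R(\mathbb D)$ is the subgroup of pairs with $g_0=1$ and $f_1=1$. $\mathcal J(\mathbb D)$ is the subgroup $\{(1,f): f=t+f_2t^2+\cdots\}$ (the group of formal power series under substitution), and $S\mathcal A(\mathbb D)=\{(g,t):g_0=1\}$. For $n\ge0$, $TS\mathcal R_n(\mathbb D)$, $T\mathcal J_n(\mathbb D)$, $TS\mathcal A_n(\mathbb D)$ denote the groups of $(n+1)\times(n+1)$ upper-left truncations $(d_{i,j})_{0\le i,j\le n}$ of elements of $S\mathcal R(\mathbb D)$, $\mathcal J(\mathbb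 D)$, $S\mathcal A(\mathbb D)$ respectively; in particular $TS\mathcal A_1(\mathbb D)=\{\begin{pmatrix}1&0\\\alpha&1\end{pmatrix}\}\cong\mathbb D$. $G^{ab}=G/[G,G]$ denotes the abelianization (abstract commutator subgroup). *)

(* Defs.v *)
From mathcomp Require Import all_boot all_order all_algebra.
Set Implicit Arguments. Unset Strict Implicit. Unset Printing Implicit Defensive.
Import GRing.Theory.
Local Open Scope ring_scope.

(* Abstract groups, given as a subset [gmem] of an ambient type with an *)
(* (associative) multiplication and unit; inverses are taken inside the *)
(* ambient monoid (two-sided inverses).                                  *)
Record grp := Grp {
  gT : Type;
  gmul : gT -> gT -> gT;
  gone : gT;
  gmem : gT -> Prop }.
Arguments gmem g _ : clear implicits.
Arguments gone g : clear implicits.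
Arguments gmul {g} _ _.

Definition is_inv (G : grp) (x y : gT G) : Prop :=
  gmul x y = gone G /\ gmul y x = gone G.

Definition is_commutator (G : grp) (c : gT G) : Prop :=
  exists a b a' b', [/\ gmem G a, gmem G b, is_inv a a', is_inv b b' &
    c = gmul (gmul (gmul a' b') a) b].

Inductive in_derived (G : grp) : gT G -> Prop :=
| derived_one : in_derived (gone G)
| derived_mul c x : is_commutator c -> in_derived x -> in_derived (gmul c x).
Arguments in_derived G _ : clear implicits.

Definition ab_cong (G : grp) (x y : gT G) : Prop :=
  exists y', is_inv y y' /\ in_derived G (gmul y' x).

(* G^ab is isomorphic to H^ab: there is a map phi : G -> H inducing a
   well-defined group isomorphism G/[G,G] -> H/[H,H]. *)
Definition ab_iso (G H : grp) : Prop :=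
  exists phi : gT G -> gT H,
  [/\ (forall x, gmem G x -> gmem H (phi x)),
      (forall x y, gmem G x -> gmem G y ->
         ab_cong (phi (gmul x y)) (gmul (phi x) (phi y))),
      (forall x, gmem G x -> (in_derived G x <-> in_derived H (phi x))) &
      (forall h, gmem H h -> exists2 x, gmem G x & ab_cong (phi x) h)].

Definition prod_grp (A B : grp) : grp :=
  @Grp (gT A * gT B)%type
    (fun x y => (gmul x.1 y.1, gmul x.2 y.2))
    (gone A, gone B)
    (fun x => gmem A x.1 /\ gmem B x.2).

Section Riordan.
Variable D : comPzRingType.

Definition add_grp : grp := @Grp D (fun x y => x + y) 0 (fun _ => True).

Definition ps := nat -> D.
Definition ps_one : ps := fun n => (n == 0)%N%:R.
Definition ps_X : ps := fun n => (n == 1)%N%:R.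
Definition ps_mul (a b : ps) : ps :=
  fun n => \sum_(i < n.+1) a i * b (n - i)%N.
Definition ps_pow (f : ps) (k : nat) : ps := iter k (ps_mul f) ps_one.
(* composition g o f, for f with f_0 = 0 *)
Definition ps_comp (g f : ps) : ps :=
  fun n => \sum_(k < n.+1) g k * ps_pow f k n.

Definition SR_pair (g f : ps) : Prop := [/\ g 0%N = 1, f 0%N = 0 & f 1%N = 1].
Definition J_pair (g f : ps) : Prop := g = ps_one /\ SR_pair g f.
Definition SA_pair (g f : ps) : Prop := g 0%N = 1 /\ f = ps_X.

Definition riordan_mul (x y : ps * ps) : ps * ps :=
  (ps_mul x.1 (ps_comp y.1 x.2), ps_comp y.2 x.2).

Definition SR_grp : grp :=
  @Grp (ps * ps)%type riordan_mul (ps_one, ps_X) (fun x => SR_pair x.1 x.2).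
Definition J_grp : grp :=
  @Grp (ps * ps)%type riordan_mul (ps_one, ps_X) (fun x => J_pair x.1 x.2).

(* (n+1)x(n+1) upper-left truncation of the Riordan matrix of (g,f):
   d_{i,j} = [t^i] g f^j. *)
Definition riordan_trunc (n : nat) (g f : ps) : 'M[D]_n.+1 :=
  \matrix_(i < n.+1, j < n.+1) ps_mul g (ps_pow f j) i.

Definition trunc_grp (n : nat) (P : ps -> ps -> Prop) : grp :=
  @Grp 'M[D]_n.+1 (fun A B => A *m B) 1%:M
    (fun M => exists g f, P g f /\ M = riordan_trunc n g f).

Definition TSR_grp n := trunc_grp n SR_pair.
Definition TJ_grp n := trunc_grp n J_pair.
Definition TSA_grp n := trunc_grp n SA_pair.

End Riordan.

(* Main.v *)
Require Import Defs.
From mathcomp Require Import all_boot all_order all_algebra.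
From Stdlib Require Import FunctionalExtensionality Lia.
From mathcomp Require Import zify.
Set Implicit Arguments. Unset Strict Implicit. Unset Printing Implicit Defensive.
Import GRing.Theory.
Local Open Scope ring_scope.

Section PS.
Variable D : comPzRingType.
Local Notation ps := (ps D).
Local Notation one := (ps_one D).
Local Notation X := (ps_X D).

Lemma ps_ext (a b : ps) : (forall n, a n = b n) -> a = b.
Proof. move=> h; exact: functional_extensionality h. Qed.

Lemma sum_widen (F : nat -> D) m1 m2 : (m1 <= m2)%N ->
  (forall j, (m1 <= j)%N -> (j < m2)%N -> F j = 0) ->
  \sum_(j < m1) F j = \sum_(j < m2) F j.
Proof.
move=> le h; rewrite (big_ord_widen m2 F le) big_mkcond /=.
apply: eq_bigr => i _; case: ifP => // /negbT; rewrite -leqNgt => hi.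
by rewrite h.
Qed.

Lemma sum_tri (F : nat -> nat -> D) n :
  \sum_(k < n.+1) \sum_(i < k.+1) F i k =
  \sum_(i < n.+1) \sum_(j < (n - i).+1) F i (i + j)%N.
Proof.
elim: n => [|n IH].
  by rewrite !big_ord_recl !big_ord0 /= !addr0.
rewrite big_ord_recr /= IH [in RHS]big_ord_recr /= subnn big_ord1 addn0.
rewrite [in RHS](eq_bigr (fun i : 'I_n.+1 =>
   \sum_(j < (n - i).+1) F i (i + j)%N + F i n.+1)); last first.
  move=> i _; rewrite subSn ?(leq_ord i) // big_ord_recr /=.
  by rewrite addnS subnKC // -ltnS.
rewrite big_split /= -addrA; congr (_ + _).
by rewrite big_ord_recr.
Qed.

Lemma mul1ps (a : ps) : ps_mul one a = a.
Proof.
apply: ps_ext => n; rewrite /ps_mul big_ord_recl /= /ps_one /= mul1r subn0.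
by rewrite big1 ?addr0 // => i _; rewrite mul0r.
Qed.

Lemma mulpsC (a b : ps) : ps_mul a b = ps_mul b a.
Proof.
apply: ps_ext => n; rewrite /ps_mul (reindex_inj rev_ord_inj) /=.
apply: eq_bigr => i _; rewrite subSS subKn ?(leq_ord i) // mulrC.
by [].
Qed.

Lemma mulps1 (a : ps) : ps_mul a one = a.
Proof. by rewrite mulpsC mul1ps. Qed.

Lemma mulpsA (a b c : ps) : ps_mul a (ps_mul b c) = ps_mul (ps_mul a b) c.
Proof.
apply: ps_ext => n; rewrite /ps_mul; symmetry.
rewrite (eq_bigr (fun k : 'I_n.+1 => \sum_(i < k.+1) a i * b (k - i)%N * c (n - k)%N));
  last by move=> k _; rewrite mulr_suml.
rewrite (sum_tri (fun i k => a i * b (k - i)%N * c (n - k)%N)).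
apply: eq_bigr => i _; rewrite mulr_sumr; apply: eq_bigr => j _.
by rewrite addKn subnDA mulrA.
Qed.


Lemma pow0 (f : ps) : ps_pow f 0 = one. Proof. by []. Qed.
Lemma powS (f : ps) k : ps_pow f k.+1 = ps_mul f (ps_pow f k). Proof. by []. Qed.
Lemma pow1 (f : ps) : ps_pow f 1 = f. Proof. by rewrite powS pow0 mulps1. Qed.

Lemma powD (f : ps) k m : ps_pow f (k + m) = ps_mul (ps_pow f k) (ps_pow f m).
Proof.
elim: k => [|k IH]; first by rewrite add0n pow0 mul1ps.
by rewrite addSn !powS IH mulpsA.
Qed.

Lemma mul_coef0 (a b : ps) : ps_mul a b 0 = a 0%N * b 0%N.
Proof. by rewrite /ps_mul big_ord1. Qed.

Lemma mul_coef1 (a b : ps) : ps_mul a b 1 = a 0%N * b 1%N + a 1%N * b 0%N.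
Proof. by rewrite /ps_mul !big_ord_recl big_ord0 addr0. Qed.

Lemma pow_low (f : ps) k n : f 0%N = 0 -> (n < k)%N -> ps_pow f k n = 0.
Proof.
move=> f0; elim: k n => [//|k IH] n lt.
rewrite powS /ps_mul big1 // => i _.
case: i => [[|i]] /= hi; first by rewrite f0 mul0r.
rewrite IH ?mulr0 //; lia.
Qed.

Lemma pow_diag (f : ps) k : f 0%N = 0 -> f 1%N = 1 -> ps_pow f k k = 1.
Proof.
move=> f0 f1; elim: k => [|k IH]; first by rewrite pow0 /ps_one eqxx.
rewrite powS /ps_mul big_ord_recl big_ord_recl /= f0 mul0r add0r subSS subn0.
rewrite f1 mul1r IH big1 ?addr0 // => i _.
rewrite pow_low ?mulr0 // /bump !leq0n !add1n; have := ltn_ord i; lia.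
Qed.

Lemma comp0 (g f : ps) : ps_comp g f 0 = g 0%N.
Proof. by rewrite /ps_comp big_ord1 pow0 /ps_one /= mulr1. Qed.

Lemma comp_widen (g f : ps) n m : f 0%N = 0 -> (n < m)%N ->
  ps_comp g f n = \sum_(k < m) g k * ps_pow f k n.
Proof.
move=> f0 lt; rewrite /ps_comp (@sum_widen (fun k => g k * ps_pow f k n) n.+1 m lt) //.
by move=> j hj _; rewrite pow_low ?mulr0.
Qed.

Lemma comp1 (g f : ps) : f 0%N = 0 -> ps_comp g f 1 = g 1%N * f 1%N.
Proof.
move=> f0; rewrite /ps_comp !big_ord_recl big_ord0 addr0 /= mulps1.
by rewrite /ps_one /= mulr0 add0r.
Qed.

Lemma comp_one (f : ps) : ps_comp one f = one.
Proof.
apply: ps_ext => n; rewrite /ps_comp big_ord_recl /=.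
rewrite big1 ?addr0; first by rewrite /ps_one /= mul1r.
by move=> i _; rewrite /ps_one /= mul0r.
Qed.

Lemma powX k : ps_pow X k = fun n => (n == k)%:R.
Proof.
elim: k => [|k IH]; first by [].
apply: ps_ext => n; rewrite powS IH /ps_mul.
case: n => [|n].
  by rewrite big_ord1 /ps_X /= mul0r.
rewrite big_ord_recl big_ord_recl /= /ps_X /= mul0r add0r mul1r subSS subn0.
rewrite big1 ?addr0 // => i _; by rewrite mul0r.
Qed.

Lemma compX_r (g : ps) : ps_comp g X = g.
Proof.
apply: ps_ext => n; rewrite /ps_comp (bigD1 ord_max) //= powX eqxx mulr1.
rewrite big1 ?addr0 // => i hi; rewrite powX.
suff -> : (n == i) = false by rewrite mulr0.
move: hi; apply: contraNF => /eqP e; apply/eqP/val_inj; by rewrite /= -e.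
Qed.

Lemma compX_l (f : ps) : f 0%N = 0 -> ps_comp X f = f.
Proof.
move=> f0; apply: ps_ext => n; case: n => [|n]; first by rewrite comp0 f0.
rewrite /ps_comp big_ord_recl big_ord_recl /= /ps_X /= mul0r add0r mul1r mulps1.
by rewrite big1 ?addr0 // => i _; rewrite mul0r.
Qed.

Lemma lin (a h f : ps) i m : f 0%N = 0 -> (i < m)%N ->
  ps_mul a (ps_comp h f) i = \sum_(k < m) h k * ps_mul a (ps_pow f k) i.
Proof.
move=> f0 lt; rewrite /ps_mul.
rewrite (eq_bigr (fun l : 'I_i.+1 => \sum_(k < m) a l * (h k * ps_pow f k (i - l)%N))); last first.
  move=> l _; rewrite (comp_widen h f0 (_ : (i - l < m)%N)); last by lia.
  by rewrite mulr_sumr.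
rewrite exchange_big /=; apply: eq_bigr => k _; rewrite mulr_sumr.
by apply: eq_bigr => l _; rewrite mulrCA.
Qed.

Lemma comp_mul (a b f : ps) : f 0%N = 0 ->
  ps_comp (ps_mul a b) f = ps_mul (ps_comp a f) (ps_comp b f).
Proof.
move=> f0; apply: ps_ext => n.
rewrite (lin _ _ f0 (ltnSn n)).
rewrite (eq_bigr (fun j : 'I_n.+1 => \sum_(i < n.+1) a i * b j * ps_pow f (i + j) n)); last first.
  move=> j _; rewrite mulpsC (lin _ _ f0 (ltnSn n)) mulr_sumr; apply: eq_bigr => i _.
  by rewrite powD mulpsC mulrCA mulrA.
rewrite exchange_big /=.
rewrite /ps_comp.
rewrite (eq_bigr (fun k : 'I_n.+1 => \sum_(i < k.+1) a i * b (k - i)%N * ps_pow f k n)); last first.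
  by move=> k _; rewrite /ps_mul mulr_suml.
rewrite (sum_tri (fun i k => a i * b (k - i)%N * ps_pow f k n)).
apply: eq_bigr => i _.
rewrite (@sum_widen (fun j => a i * b (i + j - i)%N * ps_pow f (i + j) n) (n - i).+1 n.+1) //.
- by apply: eq_bigr => j _; rewrite addKn.
- by lia.
- by move=> j hj _; rewrite pow_low ?mulr0 //; lia.
Qed.

Lemma comp_pow (g f : ps) k : f 0%N = 0 ->
  ps_pow (ps_comp g f) k = ps_comp (ps_pow g k) f.
Proof.
move=> f0; elim: k => [|k IH]; first by rewrite !pow0 comp_one.
by rewrite !powS IH comp_mul.
Qed.

Lemma comp_assoc (h g f : ps) : g 0%N = 0 -> f 0%N = 0 ->
  ps_comp (ps_comp h g) f = ps_comp h (ps_comp g f).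
Proof.
move=> g0 f0; apply: ps_ext => n.
have -> : ps_comp h (ps_comp g f) n = \sum_(k < n.+1) h k * ps_pow (ps_comp g f) k n by [].
rewrite (eq_bigr (fun k : 'I_n.+1 => \sum_(m < n.+1) h k * ps_pow g k m * ps_pow f m n)); last first.
  move=> k _; rewrite comp_pow // /ps_comp mulr_sumr; apply: eq_bigr => m _.
  by rewrite mulrA.
rewrite exchange_big /= /ps_comp; apply: eq_bigr => m _.
rewrite mulr_suml.
rewrite (@sum_widen (fun k => h k * ps_pow g k m * ps_pow f m n) m.+1 n.+1) //.
- by move=> j hj _; rewrite pow_low ?mulr0 ?mul0r //.
Qed.

Fixpoint pref (b : nat -> D) (c : nat -> nat -> D) (n : nat) : seq D :=
  if n is n'.+1 then
    rcons (pref b c n') (b n' - \sum_(k < n') (pref b c n')`_k * c k n')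
  else [::].
Definition solve b c n := (pref b c n.+1)`_n.

Lemma size_pref b c n : size (pref b c n) = n.
Proof. by elim: n => [|n IH] //=; rewrite size_rcons IH. Qed.

Lemma nth_pref b c n k : (k < n)%N -> (pref b c n)`_k = solve b c k.
Proof.
elim: n => [//|n IH] lt /=.
rewrite nth_rcons size_pref.
case: ltnP => h; first by rewrite IH.
have e : k = n by lia.
by rewrite e eqxx /solve /= nth_rcons size_pref ltnn eqxx.
Qed.

Lemma solveE b c n : solve b c n = b n - \sum_(k < n) solve b c k * c k n.
Proof.
rewrite {1}/solve /= nth_rcons size_pref ltnn eqxx; congr (_ - _).
by apply: eq_bigr => k _; rewrite nth_pref.
Qed.

Definition inv (a : ps) : ps := solve one (fun k n => a (n - k)%N).

Lemma inv_mul (a : ps) : a 0%N = 1 -> ps_mul (inv a) a = one.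
Proof.
move=> a0; apply: ps_ext => n; rewrite /ps_mul big_ord_recr /= subnn a0 mulr1.
rewrite {2}/inv solveE; rewrite -/(inv a).
by rewrite addrC subrK.
Qed.

Lemma mul_inv (a : ps) : a 0%N = 1 -> ps_mul a (inv a) = one.
Proof. by move=> a0; rewrite mulpsC inv_mul. Qed.

Lemma inv0 (a : ps) : inv a 0%N = 1.
Proof. by rewrite /inv solveE big_ord0 subr0. Qed.

Definition linv (f : ps) : ps := solve X (fun k n => ps_pow f k n).

Lemma linv_comp (f : ps) : f 0%N = 0 -> f 1%N = 1 -> ps_comp (linv f) f = X.
Proof.
move=> f0 f1; apply: ps_ext => n; rewrite /ps_comp big_ord_recr /= pow_diag // mulr1.
rewrite {2}/linv solveE -/(linv f).
by rewrite addrC subrK.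
Qed.

Lemma linv0 (f : ps) : linv f 0%N = 0.
Proof. by rewrite /linv solveE big_ord0 subr0. Qed.

Lemma linv1 (f : ps) : linv f 1%N = 1.
Proof.
rewrite /linv solveE big_ord1 -/(linv f) linv0 mul0r subr0.
by [].
Qed.

Lemma comp_linv (f : ps) : f 0%N = 0 -> f 1%N = 1 -> ps_comp f (linv f) = X.
Proof.
move=> f0 f1.
have e : linv (linv f) = f.
  rewrite -(compX_r (linv (linv f))) -(linv_comp f0 f1).
  rewrite -comp_assoc ?linv0 // linv_comp ?linv0 ?linv1 //.
  by rewrite compX_l.
by rewrite -{1}e linv_comp ?linv0 ?linv1.
Qed.

Definition r1 : ps * ps := (one, X).
Local Notation rmul := (@riordan_mul D).
Definition SRp (x : ps * ps) := SR_pair x.1 x.2.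

Lemma one0 : one 0%N = 1. Proof. by []. Qed.
Lemma one1 : one 1%N = 0. Proof. by []. Qed.
Lemma X0 : X 0%N = 0. Proof. by []. Qed.
Lemma X1 : X 1%N = 1. Proof. by []. Qed.

Lemma rmul_closed x y : SRp x -> SRp y -> SRp (rmul x y).
Proof.
move: x y => [g1 f1] [y1 y2] [/= a0 b0 b1] [/= c0 d0 d1]; split => /=.
- by rewrite mul_coef0 comp0 a0 c0 mulr1.
- by rewrite comp0.
- by rewrite comp1 // b1 d1 mulr1.
Qed.

Lemma rmul_kappa x y : SRp x -> SRp y -> (rmul x y).1 1%N = x.1 1%N + y.1 1%N.
Proof.
move: x y => [g1 f1] [y1 y2] [/= a0 b0 b1] [/= c0 d0 d1].
by rewrite mul_coef1 comp1 // comp0 a0 b1 c0 mul1r mulr1 mulr1 addrC.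
Qed.

Lemma rmulA x y z : x.2 0%N = 0 -> y.2 0%N = 0 ->
  rmul (rmul x y) z = rmul x (rmul y z).
Proof.
move: x y z => [x1 x2] [y1 y2] [z1 z2] /= x0 y0; rewrite /riordan_mul /=.
by rewrite comp_mul // comp_assoc // comp_assoc // mulpsA.
Qed.

Lemma rmul1x x : rmul r1 x = x.
Proof. by case: x => a b; rewrite /riordan_mul /= compX_r compX_r mul1ps. Qed.

Lemma rmulx1 x : x.2 0%N = 0 -> rmul x r1 = x.
Proof. by case: x => a b /= b0; rewrite /riordan_mul /= comp_one mulps1 compX_l. Qed.

Definition rinv (x : ps * ps) : ps * ps := (ps_comp (inv x.1) (linv x.2), linv x.2).

Lemma rinv_SR x : SRp (rinv x).
Proof. by split => /=; rewrite ?comp0 ?inv0 ?linv0 ?linv1. Qed.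

Lemma rmul_rinv x : SRp x -> rmul x (rinv x) = r1.
Proof.
case: x => [g f] [/= g0 f0 f1]; rewrite /riordan_mul /rinv /=.
rewrite comp_assoc ?linv0 // linv_comp // compX_r mul_inv //.
Qed.

Lemma rinv_rmul x : SRp x -> rmul (rinv x) x = r1.
Proof.
case: x => [g f] [/= g0 f0 f1]; rewrite /riordan_mul /rinv /=.
by rewrite -comp_mul ?linv0 // inv_mul // comp_one comp_linv.
Qed.

Lemma inv_SR a a' : SRp a -> rmul a a' = r1 -> SRp a'.
Proof.
move: a a' => [g f] [g' f'] [/= g0 f0 f1] [e1 e2].
have h2 : forall n, ps_comp f' f n = X n by move=> n; rewrite e2.
have h1 : forall n, ps_mul g (ps_comp g' f) n = one n by move=> n; rewrite e1.
split => /=.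
- by move: (h1 0%N); rewrite mul_coef0 comp0 g0 mul1r.
- by move: (h2 0%N); rewrite comp0.
- by move: (h2 1%N); rewrite comp1 // f1 mulr1.
Qed.

End PS.

Section Gen.

Lemma derived_fwd (G H : grp) (phi : gT G -> gT H) :
  gmem G (gone G) ->
  (forall x y, gmem G x -> gmem G y -> gmem G (gmul x y)) ->
  (forall a a', gmem G a -> is_inv a a' -> gmem G a') ->
  (forall x, gmem G x -> gmem H (phi x)) ->
  (forall x y, gmem G x -> gmem G y -> phi (gmul x y) = gmul (phi x) (phi y)) ->
  phi (gone G) = gone H ->
  forall x, in_derived G x -> gmem G x /\ in_derived H (phi x).
Proof.
move=> m1 mM mI mphi hom phi1 x; elim => [|c y [a [b [a' [b' [ma mb ia ib ->]]]]] _ [my dy]].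
  by split => //; rewrite phi1; constructor.
have ma' := mI _ _ ma ia; have mb' := mI _ _ mb ib.
have mab := mM _ _ ma' mb'; have maba := mM _ _ mab ma.
have mc := mM _ _ maba mb.
split; first exact: (mM _ _ mc my).
rewrite hom //; constructor => //.
exists (phi a), (phi b), (phi a'), (phi b'); split; try exact: mphi.
- by case: ia => e1 e2; split; rewrite -hom // ?e1 ?e2 phi1.
- by case: ib => e1 e2; split; rewrite -hom // ?e1 ?e2 phi1.
- by rewrite hom // hom // hom.
Qed.

Lemma mk_ab_iso (G H : grp) (phi : gT G -> gT H) :
  (forall x, gmem G x -> gmem H (phi x)) ->
  (forall x y, gmem G x -> gmem G y -> phi (gmul x y) = gmul (phi x) (phi y)) ->
  (forall h, gmem H h -> exists h', is_inv h h') ->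
  (forall x y, gmem H x -> gmem H y -> gmem H (gmul x y)) ->
  (forall h, gmem H h -> exists2 x, gmem G x & phi x = h) ->
  (forall x, gmem G x -> (in_derived G x <-> in_derived H (phi x))) ->
  ab_iso G H.
Proof.
move=> mphi hom hinv hM surj der; exists phi; split => //.
- move=> x y mx my; rewrite hom //.
  have [y' [e1 e2]] := hinv _ (hM _ _ (mphi _ mx) (mphi _ my)).
  by exists y'; split; [split | rewrite e2; constructor].
- move=> h mh; have [x mx e] := surj _ mh; exists x => //.
  have [y' [e1 e2]] := hinv _ mh.
  by exists y'; split; [split | rewrite e e2; constructor].
Qed.

Lemma derived_prod (K J : grp) k j :
  (forall c, @is_commutator K c -> c = gone K) ->
  gmul (gone K) (gone K) = gone K -> gmem K (gone K) ->
  (in_derived (prod_grp K J) (k, j) <-> k = gone K /\ in_derived J j).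
Proof.
move=> hc h11 m1; split.
  move e : (k, j) => p dp; elim: dp k j e => [|c x hcx dx IH] k j e.
    by move: e => /= [-> ->]; split => //; constructor.
  move: e => /= [-> ->].
  move: hcx => [a [b [a' [b' [[ma1 ma2] [mb1 mb2] [ia1 ia2] [ib1 ib2] ec]]]]].
  have [-> dx2] := IH _ _ (esym (surjective_pairing x)).
  rewrite ec /=; split.
    rewrite (hc (gmul (gmul (gmul a'.1 b'.1) a.1) b.1)) //.
    exists a.1, b.1, a'.1, b'.1; split => //.
      by split; [move: ia1 => /(congr1 fst) | move: ia2 => /(congr1 fst)].
    by split; [move: ib1 => /(congr1 fst) | move: ib2 => /(congr1 fst)].
  constructor => //.
  exists a.2, b.2, a'.2, b'.2; split => //.
    by split; [move: ia1 => /(congr1 snd) | move: ia2 => /(congr1 snd)].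
  by split; [move: ib1 => /(congr1 snd) | move: ib2 => /(congr1 snd)].
case=> -> dj; elim: dj => [|c x hcx dx IH]; first by constructor.
have -> : (gone K, gmul c x) = @gmul (prod_grp K J) (gone K, c) (gone K, x).
  by rewrite /= h11.
constructor => //.
move: hcx => [a [b [a' [b' [ma mb [ia1 ia2] [ib1 ib2] ec]]]]].
exists (gone K, a), (gone K, b), (gone K, a'), (gone K, b'); split => //.
- by split; rewrite /= ?h11 ?ia1 ?ia2.
- by split; rewrite /= ?h11 ?ib1 ?ib2.
- by rewrite /= !h11 ec.
Qed.

End Gen.

Section Main.
Variable D : comPzRingType.
Local Notation ps := (ps D).
Local Notation one := (ps_one D).
Local Notation X := (ps_X D).
Local Notation rmul := (@riordan_mul D).
Local Notation r1 := (r1 D).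

Lemma J_SR_derived y : in_derived (J_grp D) y -> in_derived (SR_grp D) y.
Proof.
elim => [|c x [a [b [a' [b' [ma mb ia ib ec]]]]] _ IH]; first exact: derived_one.
apply: derived_mul => //.
by exists a, b, a', b'; split => //; [case: ma | case: mb].
Qed.

Lemma add_comm_trivial c : @is_commutator (add_grp D) c -> c = 0.
Proof.
move=> [a [b [a' [b' [_ _ [e1 e2] [f1 f2] ->]]]]] /=.
move: e2 f2 => /= e2 f2.
have H : forall u v u' v' : D, u' + u = 0 -> v' + v = 0 -> u' + v' + u + v = 0.
  by move=> u v u' v' p q; rewrite -addrA addrACA p q addr0.
exact: H.
Qed.

Definition hps : ps := fun n => one n + X n.

Lemma comp_h (psi : ps) : psi 0%N = 0 -> ps_comp hps psi = fun n => one n + psi n.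
Proof.
move=> p0; apply: ps_ext => n; case: n => [|n].
  by rewrite comp0 /hps p0.
rewrite /ps_comp big_ord_recl big_ord_recl /=.
rewrite big1; last by move=> i _; rewrite /hps /ps_one /ps_X /= addr0 mul0r.
by rewrite mulps1 /hps /ps_one /ps_X /= mulr0 !add0r mul1r addr0.
Qed.

Lemma hX_comm (g : ps) : g 0%N = 1 -> g 1%N = 0 -> @is_commutator (SR_grp D) (g, X).
Proof.
move=> g0 g1.
pose psi : ps := fun n => ps_mul g hps n - one n.
have h0 : hps 0%N = 1 by rewrite /hps /ps_one /ps_X /= addr0.
have p0 : psi 0%N = 0 by rewrite /psi mul_coef0 g0 h0 mulr1 subrr.
have p1 : psi 1%N = 1.
  by rewrite /psi mul_coef1 g0 g1 h0 /hps /ps_one /ps_X /= mul0r !addr0 add0r mul1r subr0.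
pose phi := linv psi.
exists (hps, X), (one, phi), (inv hps, X), (one, psi); split.
- split; [exact: h0 | exact: X0 | exact: X1].
- split; [exact: one0 | exact: linv0 | exact: linv1].
- split; rewrite /= /riordan_mul /= !compX_r.
    by rewrite mul_inv.
  by rewrite inv_mul.
- split; rewrite /= /riordan_mul /= comp_one mulps1.
    by rewrite comp_linv.
  by rewrite linv_comp.
- rewrite /= /riordan_mul /= comp_one compX_r compX_l // mulps1 comp_one mulps1.
  rewrite comp_h // linv_comp //.
  have -> : (fun n => one n + psi n) = ps_mul g hps.
    by apply: ps_ext => n; rewrite /psi addrC subrK.
  by rewrite (mulpsC g) mulpsA inv_mul // mul1ps.
Qed.


Lemma SRp_one : SRp r1.
Proof. split; [exact: one0 | exact: X0 | exact: X1]. Qed.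

Lemma J_inv f : f 0%N = 0 -> f 1%N = 1 ->
  @is_inv (J_grp D) (one, f) (one, linv f).
Proof.
move=> f0 f1; split; rewrite /= /riordan_mul /= comp_one mul1ps.
  by rewrite linv_comp.
by rewrite comp_linv.
Qed.

Lemma J_mul f f' : rmul (one, f) (one, f') = (one, ps_comp f' f).
Proof. by rewrite /riordan_mul /= comp_one mul1ps. Qed.

Lemma SR_iso : ab_iso (SR_grp D) (prod_grp (add_grp D) (J_grp D)).
Proof.
pose phi := fun x : ps * ps =>
  ((x.1 1%N : gT (add_grp D)), ((one, x.2) : gT (J_grp D))) : gT (prod_grp (add_grp D) (J_grp D)).
have mphi : forall x, gmem (SR_grp D) x -> gmem (prod_grp (add_grp D) (J_grp D)) (phi x).
  move=> [g f] [/= g0 f0 f1]; split => //; split => //; split => //; exact: one0.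
have hom : forall x y, gmem (SR_grp D) x -> gmem (SR_grp D) y ->
    phi (gmul x y) = gmul (phi x) (phi y).
  move=> x y mx my; rewrite /phi /=; congr (_, _).
    exact: (rmul_kappa mx my).
  by rewrite J_mul.
apply: (@mk_ab_iso (SR_grp D) (prod_grp (add_grp D) (J_grp D)) phi) => //.
- move=> [d [g f]] [_ [/= -> [_ f0 f1]]].
  exists (- d : gT (add_grp D), (one, linv f) : gT (J_grp D)); split.
  + rewrite /= subrr; congr (_, _); by case: (J_inv f0 f1).
  + rewrite /= addNr; congr (_, _); by case: (J_inv f0 f1).
- move=> [d [g f]] [d' [g' f']] [_ [/= e1 m1]] [_ [/= e2 m2]]; split => //=.
  have := @rmul_closed D (g, f) (g', f') m1 m2; rewrite e1 e2 J_mul /= => m.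
  by rewrite comp_one mul1ps; split.
- move=> [d [g f]] [_ [/= -> [_ f0 f1]]].
  exists ((fun n => one n + (n == 1%N)%:R * d), f).
    split => /=; rewrite ?f0 ?f1 //. by rewrite one0 mul0r addr0.
  by rewrite /phi /= one1 mul1r add0r.
- move=> x mx; split.
    move=> dx.
    have phi1 : phi r1 = gone (prod_grp (add_grp D) (J_grp D)) by rewrite /phi /= one1.
    by case: (@derived_fwd (SR_grp D) (prod_grp (add_grp D) (J_grp D)) phi SRp_one
      (fun x y mx my => rmul_closed mx my)
      (fun a a' ma ia => inv_SR ma (proj1 ia)) mphi hom phi1 x dx).
  rewrite /phi derived_prod; first last.
  + by [].
  + by rewrite /= addr0.
  + exact: add_comm_trivial.
  move=> [k0 dj].
  have e : x = rmul (x.1, X) (one, x.2).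
    by rewrite /riordan_mul /= comp_one mulps1 compX_r -surjective_pairing.
  rewrite e; apply: derived_mul; last exact: J_SR_derived.
  case: mx => g0 _ _; exact: hX_comm.
Qed.

End Main.

Section Trunc.
Variable D : comPzRingType.
Local Notation ps := (ps D).
Local Notation one := (ps_one D).
Local Notation X := (ps_X D).
Local Notation rmul := (@riordan_mul D).
Local Notation r1 := (r1 D).
Local Notation R n x := (riordan_trunc n x.1 x.2).

Lemma R_mul n x y : x.2 0%N = 0 -> R n (rmul x y) = R n x *m R n y.
Proof.
move=> x0; apply/matrixP => i j; rewrite !mxE /riordan_mul /=.
rewrite comp_pow // -mulpsA -comp_mul // (lin _ _ x0 (ltn_ord i)).
by apply: eq_bigr => k _; rewrite !mxE mulrC.
Qed.

Lemma R_one n : R n r1 = 1%:M.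
Proof.
apply/matrixP => i j; rewrite !mxE /= mul1ps powX.
by case: (i =P j) => [->|ne]; rewrite ?eqxx //; case: eqP => // e; case: ne; exact: val_inj.
Qed.

Definition eqn m (a b : ps) := forall i, (i <= m)%N -> a i = b i.

Lemma mul_eqn m a a' b b' : eqn m a a' -> eqn m b b' -> eqn m (ps_mul a b) (ps_mul a' b').
Proof.
move=> ha hb i le; rewrite /ps_mul; apply: eq_bigr => k _.
rewrite ha ?hb //; first by lia.
by have := ltn_ord k; lia.
Qed.

Lemma R_eqn n g g' f : eqn n g g' -> riordan_trunc n g f = riordan_trunc n g' f.
Proof.
move=> h; apply/matrixP => i j; rewrite !mxE.
apply: (@mul_eqn n g g' _ _ h (fun k _ => erefl)).
by have := ltn_ord i; lia.
Qed.

Lemma R_inv n (x : ps * ps) : SRp x -> R n x *m R n (rinv x) = 1%:M /\ R n (rinv x) *m R n x = 1%:M.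
Proof.
move=> mx; case: (mx) => _ x0 _.
by rewrite -!R_mul ?rmul_rinv ?rinv_rmul ?R_one //= linv0.
Qed.


Definition gM n (M : 'M[D]_n.+1) : ps := fun i => if (i <= n)%N then M (inord i) ord0 else 0.
Definition Amap n (M : 'M[D]_n.+1) : 'M[D]_2 := riordan_trunc 1 (gM M) X.
Definition Bmap n (M : 'M[D]_n.+1) : 'M[D]_n.+1 := riordan_trunc n (inv (gM M)) X *m M.
Definition kap n (M : 'M[D]_n.+1) : D := M (inord 1) ord0.

Lemma gM_R n g f : eqn n (gM (riordan_trunc n g f)) g.
Proof.
move=> i le; rewrite /gM le mxE inordK //= mulps1 //.
Qed.

Lemma A_R n g f : (1 <= n)%N -> Amap (riordan_trunc n g f) = riordan_trunc 1 g X.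
Proof.
move=> n1; apply: R_eqn => i le; apply: gM_R; lia.
Qed.

Lemma SA_mul m g h : riordan_trunc m g X *m riordan_trunc m h X = riordan_trunc m (ps_mul g h) X.
Proof.
have := @R_mul m (g, X) (h, X) (X0 D); rewrite /= => <-.
by rewrite /riordan_mul /= compX_r compX_r.
Qed.

Lemma B_R n g f : SR_pair g f -> Bmap (riordan_trunc n g f) = riordan_trunc n one f.
Proof.
move=> [g0 f0 f1]; rewrite /Bmap.
have := @R_mul n (inv (gM (riordan_trunc n g f)), X) (g, f) (X0 D); rewrite /= => <-.
rewrite /riordan_mul /= !compX_r; apply: R_eqn => i le.
have e0 : gM (riordan_trunc n g f) 0%N = 1 by rewrite gM_R.
rewrite -(inv_mul e0).
apply: (@mul_eqn i _ _ _ _ (fun k _ => erefl) _ i (leqnn i)) => k hk.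
rewrite gM_R //; lia.
Qed.

Lemma kap_R n g f : (1 <= n)%N -> kap (riordan_trunc n g f) = g 1%N.
Proof. by move=> n1; rewrite /kap mxE inordK //= mulps1. Qed.

Lemma comp_eqn1 (g f : ps) : f 0%N = 0 -> f 1%N = 1 -> eqn 1 (ps_comp g f) g.
Proof.
move=> f0 f1 [|[|i]] // _; first by rewrite comp0.
by rewrite comp1 // f1 mulr1.
Qed.

Lemma TSR_mem_mul n M N : gmem (TSR_grp D n) M -> gmem (TSR_grp D n) N ->
  gmem (TSR_grp D n) (M *m N).
Proof.
move=> [g [f [mx ->]]] [g' [f' [my ->]]].
have := @rmul_closed D (g, f) (g', f') mx my => m.
exists (rmul (g, f) (g', f')).1, (rmul (g, f) (g', f')).2; split => //.
by rewrite (@R_mul n (g, f) (g', f')) //; case: mx.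
Qed.

Lemma TSR_inv_mem n M M' : gmem (TSR_grp D n) M -> @is_inv (TSR_grp D n) M M' ->
  gmem (TSR_grp D n) M'.
Proof.
move=> [g [f [mx ->]]] [e1 e2].
have [h1 h2] := @R_inv n (g, f) mx.
exists (rinv (g, f)).1, (rinv (g, f)).2; split; first exact: rinv_SR.
move: e2 => /= e2.
by rewrite -[M']mulmx1 -h1 mulmxA e2 mul1mx.
Qed.

Lemma comm_R n c : @is_commutator (SR_grp D) c -> @is_commutator (TSR_grp D n) (R n c).
Proof.
move=> [a [b [a' [b' [ma mb [ia1 ia2] [ib1 ib2] ->]]]]].
have ma' : SRp a' := inv_SR ma ia1.
have mb' : SRp b' := inv_SR mb ib1.
have mab := rmul_closed ma' mb'.
have maba := rmul_closed mab ma.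
exists (R n a), (R n b), (R n a'), (R n b'); split.
- by exists a.1, a.2.
- by exists b.1, b.2.
- split.
  + rewrite /= -R_mul; last by case: ma.
    by rewrite (ia1 : rmul a a' = r1) R_one.
  + rewrite /= -R_mul; last by case: ma'.
    by rewrite (ia2 : rmul a' a = r1) R_one.
- split.
  + rewrite /= -R_mul; last by case: mb.
    by rewrite (ib1 : rmul b b' = r1) R_one.
  + rewrite /= -R_mul; last by case: mb'.
    by rewrite (ib2 : rmul b' b = r1) R_one.
- change (R n (rmul (rmul (rmul a' b') a) b) = ((R n a' *m R n b') *m R n a) *m R n b).
  rewrite R_mul; last by case: maba.
  rewrite R_mul; last by case: mab.
  by rewrite R_mul //; case: ma'.
Qed.

Lemma TJ_TSR_derived n y : in_derived (TJ_grp D n) y -> in_derived (TSR_grp D n) y.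
Proof.
elim => [|c x [a [b [a' [b' [ma mb ia ib ec]]]]] _ IH]; first exact: derived_one.
apply: derived_mul => //.
exists a, b, a', b'; split => //.
  by case: ma => g [f [[_ m] e]]; exists g, f.
by case: mb => g [f [[_ m] e]]; exists g, f.
Qed.

Lemma key_back n g f : SR_pair g f -> g 1%N = 0 ->
  in_derived (TJ_grp D n) (riordan_trunc n one f) ->
  in_derived (TSR_grp D n) (riordan_trunc n g f).
Proof.
move=> [g0 f0 f1] g1 dj.
have e : riordan_trunc n g f = R n (g, X) *m R n (one, f).
  rewrite -R_mul //= /riordan_mul /= comp_one mulps1 compX_r //.
rewrite e; apply: derived_mul; last exact: TJ_TSR_derived.
exact: comm_R (hX_comm g0 g1).
Qed.

Lemma TSA_comm c : @is_commutator (TSA_grp D 1) c -> c = 1%:M.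
Proof.
move=> [a [b [a' [b' [ma mb [ia1 ia2] [ib1 ib2] ->]]]]].
move: ia1 ia2 ib1 ib2 => /= ia1 ia2 ib1 ib2.
have cab : a *m b = b *m a.
  case: ma => g [f [[_ ->] ->]]; case: mb => h [f' [[_ ->] ->]].
  by rewrite !SA_mul mulpsC.
by rewrite -!mulmxA cab (mulmxA b') ib2 mul1mx ia2.
Qed.

End Trunc.

Section Final.
Variable D : comPzRingType.
Local Notation ps := (ps D).
Local Notation one := (ps_one D).
Local Notation X := (ps_X D).
Local Notation rmul := (@riordan_mul D).
Local Notation r1 := (r1 D).
Local Notation R n x := (riordan_trunc n x.1 x.2).

Lemma TSR_one n : gmem (TSR_grp D n) 1%:M.
Proof. exists one, X; split; [exact: SRp_one | by rewrite -(R_one D n)]. Qed.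

Lemma R_mul' n g f g' f' : SR_pair g f ->
  riordan_trunc n g f *m riordan_trunc n g' f' =
  riordan_trunc n (rmul (g, f) (g', f')).1 (rmul (g, f) (g', f')).2.
Proof. by move=> [_ f0 _]; rewrite (@R_mul D n (g, f) (g', f')). Qed.

Lemma TJ_R_mul n f f' : f 0%N = 0 ->
  riordan_trunc n one f *m riordan_trunc n one f' = riordan_trunc n one (ps_comp f' f).
Proof. by move=> f0; rewrite -(@R_mul D n (one, f) (one, f') f0) J_mul. Qed.

Lemma B_hom n M N : gmem (TSR_grp D n) M -> gmem (TSR_grp D n) N ->
  Bmap (M *m N) = Bmap M *m Bmap N.
Proof.
move=> [g [f [mx ->]]] [g' [f' [my ->]]].
rewrite R_mul' // B_R; last exact: (@rmul_closed D (g, f) (g', f')).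
by rewrite !B_R // TJ_R_mul //; case: mx.
Qed.

Lemma B_mem n M : gmem (TSR_grp D n) M -> gmem (TJ_grp D n) (Bmap M).
Proof.
move=> [g [f [[g0 f0 f1] ->]]]; rewrite B_R //.
by exists one, f; split => //; split => //; split => //; exact: one0.
Qed.

Lemma TJ_inv n B : gmem (TJ_grp D n) B -> exists B', @is_inv (TJ_grp D n) B B'.
Proof.
move=> [g [f [[-> m] ->]]].
have [h1 h2] := @R_inv D n (one, f) m.
by exists (R n (rinv (one, f))); split.
Qed.

Lemma TJ_mul n B B' : gmem (TJ_grp D n) B -> gmem (TJ_grp D n) B' ->
  gmem (TJ_grp D n) (B *m B').
Proof.
move=> [g [f [[-> m] ->]]] [g' [f' [[-> m'] ->]]].
case: (m) => _ f0 _.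
rewrite TJ_R_mul //; exists one, (ps_comp f' f); split => //; split => //.
have := @rmul_closed D (one, f) (one, f') m m'; rewrite J_mul //.
Qed.

Lemma TSA_mem g : g 0%N = 1 -> gmem (TSA_grp D 1) (riordan_trunc 1 g X).
Proof. by move=> g0; exists g, X. Qed.

Lemma R1_entry (g : ps) : riordan_trunc 1 g X ord_max ord0 = g 1%N.
Proof. by rewrite mxE /= mulps1. Qed.


Lemma TSR_iso1 n : (1 <= n)%N -> ab_iso (TSR_grp D n) (prod_grp (TSA_grp D 1) (TJ_grp D n)).
Proof.
move=> n1.
pose phi := fun M : 'M[D]_n.+1 => ((Amap M : gT (TSA_grp D 1)), (Bmap M : gT (TJ_grp D n)))
  : gT (prod_grp (TSA_grp D 1) (TJ_grp D n)).
have mphi : forall M, gmem (TSR_grp D n) M -> gmem (prod_grp (TSA_grp D 1) (TJ_grp D n)) (phi M).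
  move=> M mM; split; last exact: B_mem.
  case: mM => g [f [[g0 f0 f1] ->]]; rewrite /= A_R //; exact: TSA_mem.
have hom : forall M N, gmem (TSR_grp D n) M -> gmem (TSR_grp D n) N ->
    phi (M *m N) = gmul (phi M) (phi N).
  move=> M N mM mN; rewrite /phi /=; congr (_, _); last exact: B_hom.
  case: mM => g [f [mx ->]]; case: mN => g' [f' [my ->]].
  rewrite R_mul' // !A_R // SA_mul; apply: R_eqn.
  case: mx => _ f0 f1.
  exact: (mul_eqn (fun k _ => erefl) (comp_eqn1 g' f0 f1)).
have phi1 : phi 1%:M = gone (prod_grp (TSA_grp D 1) (TJ_grp D n)).
  rewrite /phi -(R_one D n) /= A_R // B_R; last exact: SRp_one.
  by rewrite (R_one D 1) (R_one D n).
apply: (@mk_ab_iso (TSR_grp D n) (prod_grp (TSA_grp D 1) (TJ_grp D n)) phi) => //.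
- move=> [A B] [/= mA mB]; have [B' [e1 e2]] := TJ_inv mB.
  case: mA => g [f [[g0 ef] eA]]; rewrite ef in eA.
  have mg : SRp (g, X) by split; [exact: g0 | exact: X0 | exact: X1].
  have [h1 h2] := @R_inv D 1 (g, X) mg.
  exists ((R 1 (rinv (g, X)) : gT (TSA_grp D 1)), B'); split; rewrite /= eA.
    by rewrite h1; congr (_, _); exact: e1.
  by rewrite h2; congr (_, _); exact: e2.
- move=> [A B] [A' B'] [/= mA mB] [/= mA' mB']; split; last exact: TJ_mul.
  case: mA => g [f [[g0 ->] ->]]; case: mA' => g' [f' [[g0' ->] ->]].
  rewrite /= SA_mul; apply: TSA_mem; by rewrite mul_coef0 g0 g0' mulr1.
- move=> [A B] [/= mA mB].
  case: mA => h [f' [[h0 ->] ->]]; case: mB => g [f [[-> [_ f0 f1]] ->]].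
  pose gg : ps := fun i => one i + (i == 1%N)%:R * h 1%N.
  have mg : SR_pair gg f by split => //; rewrite /gg one0 mul0r addr0.
  exists (riordan_trunc n gg f); first by exists gg, f.
  rewrite /phi A_R // B_R //; congr (_, _); apply: R_eqn => -[|[|i]] // _.
  + by rewrite /gg one0 mul0r addr0 h0.
  + by rewrite /gg one1 mul1r add0r.
- move=> M mM; split.
    move=> dM.
    by case: (@derived_fwd (TSR_grp D n) (prod_grp (TSA_grp D 1) (TJ_grp D n)) phi
      (TSR_one n) (@TSR_mem_mul D n) (fun a a' ma ia => TSR_inv_mem ma ia) mphi hom phi1 M dM).
  rewrite /phi derived_prod; first last.
  + by exists one, X; split; [split; [exact: one0 | by []] | rewrite (R_one D 1)].
  + by rewrite /= mul1mx.
  + exact: TSA_comm.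
  case: mM => g [f [mx e]]; rewrite e A_R // B_R // => -[eA dB].
  have g1 : g 1%N = 0 by rewrite -R1_entry eA mxE.
  exact: key_back.
Qed.


Lemma TSR_iso2 n : (1 <= n)%N -> ab_iso (TSR_grp D n) (prod_grp (add_grp D) (TJ_grp D n)).
Proof.
move=> n1.
pose phi := fun M : 'M[D]_n.+1 => ((kap M : gT (add_grp D)), (Bmap M : gT (TJ_grp D n)))
  : gT (prod_grp (add_grp D) (TJ_grp D n)).
have mphi : forall M, gmem (TSR_grp D n) M -> gmem (prod_grp (add_grp D) (TJ_grp D n)) (phi M).
  by move=> M mM; split; last exact: B_mem.
have hom : forall M N, gmem (TSR_grp D n) M -> gmem (TSR_grp D n) N ->
    phi (M *m N) = gmul (phi M) (phi N).
  move=> M N mM mN; rewrite /phi /=; congr (_, _); last exact: B_hom.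
  case: mM => g [f [mx ->]]; case: mN => g' [f' [my ->]].
  rewrite R_mul' // !kap_R //.
  exact: (@rmul_kappa D (g, f) (g', f') mx my).
have phi1 : phi 1%:M = gone (prod_grp (add_grp D) (TJ_grp D n)).
  rewrite /phi -(R_one D n) /= kap_R // B_R; last exact: SRp_one.
  by rewrite (R_one D n) one1.
apply: (@mk_ab_iso (TSR_grp D n) (prod_grp (add_grp D) (TJ_grp D n)) phi) => //.
- move=> [d B] [/= _ mB]; have [B' [e1 e2]] := TJ_inv mB.
  exists ((- d : gT (add_grp D)), B'); split; rewrite /=.
    by rewrite subrr; congr (_, _); exact: e1.
  by rewrite addNr; congr (_, _); exact: e2.
- move=> [d B] [d' B'] [/= _ mB] [/= _ mB']; split; last exact: TJ_mul.
  by [].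
- move=> [d B] [/= _ mB].
  case: mB => g [f [[-> [_ f0 f1]] ->]].
  pose gg : ps := fun i => one i + (i == 1%N)%:R * d.
  have mg : SR_pair gg f by split => //; rewrite /gg one0 mul0r addr0.
  exists (riordan_trunc n gg f); first by exists gg, f.
  by rewrite /phi kap_R // B_R // /gg one1 mul1r add0r.
- move=> M mM; split.
    move=> dM.
    by case: (@derived_fwd (TSR_grp D n) (prod_grp (add_grp D) (TJ_grp D n)) phi
      (TSR_one n) (@TSR_mem_mul D n) (fun a a' ma ia => TSR_inv_mem ma ia) mphi hom phi1 M dM).
  rewrite /phi derived_prod; first last.
  + by [].
  + by rewrite /= addr0.
  + exact: add_comm_trivial.
  case: mM => g [f [mx e]]; rewrite e kap_R // B_R // => -[g1 dB].
  exact: key_back.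
Qed.

End Final.

Theorem theorem3 (D : comPzRingType) :
  (forall n : nat, (1 <= n)%N ->
     ab_iso (TSR_grp D n) (prod_grp (TSA_grp D 1) (TJ_grp D n)) /\
     ab_iso (TSR_grp D n) (prod_grp (add_grp D) (TJ_grp D n))) /\
  ab_iso (SR_grp D) (prod_grp (add_grp D) (J_grp D)).
Proof.
split; last exact: SR_iso.
by move=> n n1; split; [exact: TSR_iso1 | exact: TSR_iso2].
Qed.
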